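(* Let $d>0$, $\mu>0$, let $J$ satisfy (J) and let $f$ satisfy (f3). Suppose there is a pair $(c_0,\phi^{c_0})\in(0,\infty)\times C^1((-\infty,0])$, with $\phi^{c_0}\ge0$ nonincreasing in $x$, satisfying $$d\int_{-\infty}^0J(x-y)\phi^{c_0}(y)\,dy-d\phi^{c_0}(x)+c_0(\phi^{c_0})'(x)+f(\phi^{c_0}(x))=0\ (x<0),\quad \phi^{c_0}(-\infty)=1,\ \phi^{c_0}(0)=0,$$ and $$c_0=\mu\int_{-\infty}^0\int_0^{+\infty}J(x-y)\phi^{c_0}(x)\,dy\,dx.$$ Then $\int_{-\infty}^0\int_0^{+\infty}J(x-y)\,dy\,dx<+\infty$.
   Context: Condition (J): $J\in C(\mathbb{R})\cap L^\infty(\mathbb{R})$, $J\ge 0$, $J(0)>0$, $\int_{\mathbb{R}}J=1$, $J$ even. Condition (f3): $f\in C^1([0,\infty))$, $f(0)=f(1)=0$, $f>0$ in $(0,1)$, $f'(0)>0>f'(1)$, $f(u)/u$ nonincreasing in $u>0$. *)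

(* Defs.v *)
From HB Require Import structures.
From mathcomp Require Import all_boot all_order all_algebra.
From mathcomp Require Import all_classical all_reals all_analysis.
Set Implicit Arguments. Unset Strict Implicit. Unset Printing Implicit Defensive.
Import Order.TTheory GRing.Theory Num.Theory.
Import numFieldNormedType.Exports.
Local Open Scope classical_set_scope.
Local Open Scope ring_scope.

Definition condJ (R : realType) (J : R -> R) : Prop :=
  continuous J /\
  (exists M : R, forall x : R, `|J x| <= M) /\
  (forall x : R, 0 <= J x) /\
  0 < J 0 /\
  (\int[@lebesgue_measure R]_(x in [set: R]) (J x)%:E = 1)%E /\
  (forall x : R, J (- x) = J x).

Definition condf3 (R : realType) (f f' : R -> R) : Prop :=
  ((forall u : R, 0 < u -> is_derive u 1 f (f' u)) /\
   ((h : R)^-1 * (f h - f 0)) @[h --> 0^'+] --> f' 0 /\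
   {within `[(0%R:R), +oo[, continuous f'}) /\
  f 0 = 0 /\ f 1 = 0 /\
  (forall u : R, 0 < u < 1 -> 0 < f u) /\
  0 < f' 0 /\ f' 1 < 0 /\
  (forall u v : R, 0 < u -> u <= v -> f v / v <= f u / u).

(* Main.v *)
Require Import Defs.
From HB Require Import structures.
From mathcomp Require Import all_boot all_order all_algebra.
From mathcomp Require Import all_classical all_reals all_analysis.
From mathcomp Require Import measurable_realfun.
From mathcomp Require Import lra.
Import Order.TTheory GRing.Theory Num.Theory.
Import numFieldNormedType.Exports.
Local Open Scope classical_set_scope.
Local Open Scope ring_scope.

Lemma le_int_nm d (T : measurableType d) (R : realType) (mu : {measure set T -> \bar R})
  (D : set T) (f g : T -> \bar R) :
  (forall x, D x -> (0 <= f x)%E) -> (forall x, D x -> (f x <= g x)%E) ->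
  (\int[mu]_(x in D) f x <= \int[mu]_(x in D) g x)%E.
Proof.
move=> f0 fg.
have g0 : forall x, D x -> (0 <= g x)%E by move=> x Dx; exact: le_trans (f0 x Dx) (fg x Dx).
rewrite !ge0_integralE//.
apply: ge_ereal_sup => _ [h hf <-]; apply: ereal_sup_ubound; exists h => //= x.
apply: le_trans (hf x) _; rewrite /patch; case: ifP => // /[1!inE]; exact: fg.
Qed.

Lemma shift_int (R : realType) (J : R -> R) (x : R) :
  continuous J -> (forall t, 0 <= J t) ->
  (\int[@lebesgue_measure R]_y (J (y - x))%:E = \int[@lebesgue_measure R]_y (J y)%:E)%E.
Proof.
move=> cJ J0.
have dF : derive1 (fun y : R => y - x) = cst 1.
  apply/funext => y; rewrite derive1E deriveB //= derive_id derive_cst subr0 //.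
rewrite (@increasing_ge0_integration_by_substitutionT _ (fun y : R => y - x) J) //.
- apply: eq_integral => y _; rewrite dF /= !fctE /= mulr1 //.
- by move=> a b ab; rewrite ltrBlDr subrK.
- by rewrite dF; exact: cst_continuous.
- by rewrite dF; exact: is_cvg_cst.
- by rewrite dF; exact: is_cvg_cst.
- apply/cvgrNyPle => A; near=> y; rewrite lerBlDr.
  near: y; apply: nbhs_ninfty_le; exact: num_real.
- apply/cvgryPge => A; near=> y; rewrite lerBrDr.
  near: y; apply: nbhs_pinfty_ge; exact: num_real.
Unshelve. all: by end_near.
Qed.

Lemma Gle1 (R : realType) (J : R -> R) : continuous J -> (forall t, 0 <= J t) ->
  (\int[@lebesgue_measure R]_(x in [set: R]) (J x)%:E = 1)%E ->
  (forall t, J (- t) = J t) ->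
  forall x, (\int[@lebesgue_measure R]_(y in `[(0%R:R), +oo[) (J (x - y))%:E <= 1)%E.
Proof.
move=> cJ J0 J1 Jev x.
have -> : (1 = \int[@lebesgue_measure R]_y (J (x - y))%:E)%E.
  rewrite -J1 -(@shift_int R J x cJ J0).
  by apply: eq_integral => y _; rewrite -opprB Jev.
rewrite [X in (X <= _)%E]integral_mkcond.
apply: le_int_nm => y _.
  by rewrite /patch; case: ifP => // _; rewrite lee_fin.
by rewrite /patch; case: ifP => // _; rewrite lee_fin.
Qed.

Lemma fub_meas (R : realType) (h : R -> R -> R) :
  measurable_fun setT (fun z : R * R => h z.1 z.2) -> (forall a b, 0 <= h a b) ->
  measurable_fun [set: R] (fun x : R => ((\int[@lebesgue_measure R]_(y in `[(0%R:R), +oo[) (h x y)%:E)%E : \bar R)).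
Proof.
move=> hm h0.
have -> : (fun x => (\int[@lebesgue_measure R]_(y in `[(0%R:R), +oo[) (h x y)%:E)%E) =
  fubini_F (@lebesgue_measure R) (fun z : R * R => (h z.1 z.2 * \1_`[(0%R:R), +oo[ z.2)%:E).
  apply/funext => x; rewrite /fubini_F [LHS]integral_mkcond; apply: eq_integral => y _ /=.
  by rewrite /patch indicE; case: ifP => _; rewrite ?mulr1 ?mulr0.
apply: measurable_fun_fubini_tonelli_F.
  apply/measurable_EFinP; apply: measurable_funM => //.
  by apply: measurableT_comp => //; exact: measurable_snd.
by move=> z; rewrite lee_fin mulr_ge0.
Qed.

Theorem lemma2p10 (R : realType) (d mu : R) (J f f' : R -> R)
  (c0 : R) (phi phi' : R -> R) :
  0 < d -> 0 < mu -> condJ J -> condf3 f f' -> 0 < c0 ->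
  (* phi in C^1((-oo,0]) with derivative phi' (left derivative at 0) *)
  (forall x : R, x < 0 -> is_derive x 1 phi (phi' x)) ->
  ((h : R)^-1 * (phi h - phi 0)) @[h --> 0^'-] --> phi' 0 ->
  {within `]-oo, (0%R:R)], continuous phi'} ->
  (* phi >= 0, nonincreasing *)
  (forall x : R, x <= 0 -> 0 <= phi x) ->
  (forall x y : R, x <= y -> y <= 0 -> phi y <= phi x) ->
  (* the traveling-wave equation *)
  (forall x : R, x < 0 ->
     d * Rintegral (@lebesgue_measure R) `]-oo, (0%R:R)] (fun y => J (x - y) * phi y)
     - d * phi x + c0 * phi' x + f (phi x) = 0) ->
  phi x @[x --> -oo%R] --> (1 : R) ->
  phi 0 = 0 ->
  (c0%:E = mu%:E *
     \int[@lebesgue_measure R]_(x in `]-oo, (0%R:R)])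
        \int[@lebesgue_measure R]_(y in `[(0%R:R), +oo[) (J (x - y)%R * phi x)%R%:E)%E ->
  (\int[@lebesgue_measure R]_(x in `]-oo, (0%R:R)])
      \int[@lebesgue_measure R]_(y in `[(0%R:R), +oo[) (J (x - y)%R)%R%:E < +oo)%E.
Proof.
move=> d0 mu0 [cJ [_ [J0 [_ [J1 Jev]]]]] _ c00 _ _ _ phi0 phimono _ hlim _ hc.
set I := (\int[lebesgue_measure]_(x in `]-oo, 0%R]) _)%E in hc.
have I0 : (0 <= I)%E.
  apply: integral_ge0 => x; rewrite /= in_itv /= => x0.
  by apply: integral_ge0 => y _; rewrite lee_fin mulr_ge0 // phi0.
have Ifin : (I < +oo)%E.
  rewrite ltey; apply/negP => /eqP HI; move: hc; rewrite HI gt0_muley ?lte_fin //.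
have [M [_ HM]] : \forall x \near -oo%R, 1/2 < phi x.
  by apply: (@cvgr_gt _ _ _ _ _ 1 hlim); lra.
pose X := Num.min M (-1).
have X0 : X < 0 by rewrite /X gt_min; apply/orP; right; lra.
have HX : forall x, x < X -> 1/2 < phi x.
  by move=> x xX; apply: HM; apply: lt_le_trans xX _; rewrite /X ge_min lexx.
pose phit := fun x : R => phi (Num.min x 0).
have phitE : forall x, x <= 0 -> phit x = phi x by move=> x x0; rewrite /phit min_l.
have Jm : measurable_fun [set: R * R] (fun z : R * R => J (z.1 - z.2)).
  apply: measurableT_comp; first exact: continuous_measurable_fun.
  by apply: measurable_funB; [exact: measurable_fst | exact: measurable_snd].
have Gm := @fub_meas R (fun x y => J (x - y)) Jm (fun a b => J0 _).
have phitm : measurable_fun [set: R] phit.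
  apply: nonincreasing_measurable => // a b ab; rewrite /phit.
  apply: phimono; last by rewrite ge_min lexx orbT.
  by rewrite le_min !ge_min ab lexx !orbT.
have phit0 : forall x, 0 <= phit x by move=> x; apply: phi0; rewrite ge_min lexx orbT.
have Hm := @fub_meas R (fun x y => J (x - y) * phit x)
  (measurable_funM Jm (measurableT_comp phitm measurable_fst))
  (fun a b => mulr_ge0 (J0 _) (phit0 _)).
have Dsplit : [set` `]-oo, 0%R]] = [set` `]-oo, X[] `|` [set` `[X, 0%R]] :> set R.
  apply/seteqP; split => x /=; rewrite !in_itv /=.
    move=> x0; case: (ltP x X) => xX; [by left | by right; rewrite x0].
  by case=> [xX | /andP[_ ->]] //; apply: ltW; apply: lt_trans xX X0.
rewrite Dsplit ge0_integral_setU //=; first last.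
- apply/disj_set2P; apply/seteqP; split => x //= [].
  rewrite !in_itv /= => xX /andP[Xx _].
  by move: (lt_le_trans xX Xx); rewrite ltxx.
- by move=> x _; apply: integral_ge0 => y _; rewrite lee_fin.
- exact: measurable_funTS.
apply: lte_add_pinfty.
- apply: (@le_lt_trans _ _ (2%:E * I)%E); last by rewrite lte_mul_pinfty.
  apply: (@le_trans _ _ (\int[lebesgue_measure]_(x in `]-oo, X[)
       (2%:E * \int[lebesgue_measure]_(y in `[0%R, +oo[) (J (x - y) * phit x)%:E))%E).
    apply: le_int_nm => x; rewrite /= in_itv /= => xX.
      by apply: integral_ge0 => y _; rewrite lee_fin.
    have x0 : x <= 0 by apply: ltW (lt_trans xX X0).
    apply: (@le_trans _ _ (\int[lebesgue_measure]_(y in `[0%R, +oo[)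
       (2%:E * (J (x - y) * phit x)%:E))%E).
      apply: le_int_nm => y _; first by rewrite lee_fin.
      rewrite -EFinM lee_fin phitE //.
      by have := HX x xX; have := J0 (x - y); nra.
    rewrite ge0_integralZl //.
    - apply: measurable_funTS; apply/measurable_EFinP.
      apply: measurable_funM => //.
      apply: measurableT_comp; first exact: continuous_measurable_fun.
      exact: measurable_funB.
    - by move=> y _; rewrite lee_fin mulr_ge0.
  rewrite ge0_integralZl //.
  - apply: lee_wpmul2l => //.
    apply: (@le_trans _ _ (\int[lebesgue_measure]_(x in `]-oo, 0%R])
       \int[lebesgue_measure]_(y in `[0%R, +oo[) (J (x - y) * phit x)%:E)%E).
      apply: ge0_subset_integral => //.
      + exact: measurable_funTS.
      + by move=> x _; apply: integral_ge0 => y _; rewrite lee_fin mulr_ge0.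
      + by move=> x /=; rewrite !in_itv /= => xX; apply: ltW (lt_trans xX X0).
    rewrite le_eqVlt; apply/orP; left; apply/eqP.
    apply: eq_integral => x; rewrite inE /= in_itv /= => x0.
    by apply: eq_integral => y _; rewrite phitE.
  - exact: measurable_funTS.
  - by move=> x _; apply: integral_ge0 => y _; rewrite lee_fin mulr_ge0.
- apply: (@le_lt_trans _ _ (\int[lebesgue_measure]_(x in `[X, 0%R]) (cst 1%E x))%E).
    apply: le_int_nm => x _.
      by apply: integral_ge0 => y _; rewrite lee_fin.
    exact: Gle1.
  rewrite integral_cst // mul1e.
  have h : (@lebesgue_measure R [set` `[X, 0%R]] < +oo)%E.
    by rewrite lebesgue_measure_itv /=; case: ifP => _ //; rewrite -EFinB ltry.
  exact: h.
Qed.
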